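(* Let $n\in\mathbb{N}$ and let $a=3$ or $a>5$ (real). Let $E_n(a,1)$ be the $(n+1)\times n$ matrix whose $(i,j)$ entry is $-a$ if $i=j$, $1$ if $j=i+1$, $a$ if $i=j+1$, $-1$ if $i=j+2$, and $0$ otherwise, and let $B_n(a,1)$ be the $(n+3)\times n$ matrix whose first row is $(1,0,\dots,0)$, whose rows $2,\dots,n+2$ are the rows of $E_n(a,1)$ in order, and whose last row is $(0,\dots,0,-1)$. For $1\le i<j<k\le n+3$, let $B_n(a,1)^{i,j,k}$ be the $n\times n$ matrix obtained by deleting the $i$-th, $j$-th and $k$-th rows of $B_n(a,1)$. Then $|B_n(a,1)^{i,j,k}|\neq0$.
   Context: $|M|$ denotes the determinant of a square matrix $M$. *)

(* Defs.v *)
From HB Require Import structures.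
From mathcomp Require Import all_boot all_order all_algebra.
From mathcomp Require Import reals.
Set Implicit Arguments. Unset Strict Implicit. Unset Printing Implicit Defensive.
Import Order.TTheory GRing.Theory Num.Theory.
Local Open Scope ring_scope.

(* Entry (r, c) of E_n(a,1), 0-based indices (r < n+1, c < n). *)
Definition Eentry (R : ringType) (a : R) (r c : nat) : R :=
  if r == c then - a
  else if c == r.+1 then 1
  else if r == c.+1 then a
  else if r == c.+2 then -1
  else 0.

Definition Bmat (R : ringType) (n : nat) (a : R) : 'M[R]_(n.+3, n) :=
  \matrix_(r < n.+3, c < n)
    if (r : nat) == 0%N then (if (c : nat) == 0%N then 1 else 0)
    else if (r : nat) == n.+2 then (if (c : nat) == n.-1 then -1 else 0)
    else Eentry a (r.-1) c.

(* For 0-based i < j < k < n+3, the t-th (0-based) row kept after deleting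
   rows i, j, k: skip i, then j, then k. *)
Definition del3 (n : nat) (i j k : nat) (t : 'I_n) : 'I_n.+3 :=
  inord (bump k (bump j (bump i t))).

Definition Bdel (R : ringType) (n : nat) (a : R) (i j k : nat) : 'M[R]_n :=
  rowsub (del3 i j k) (Bmat n a).

(* Main.v *)
Require Import Defs.
From HB Require Import structures.
From mathcomp Require Import all_boot all_order all_algebra.
From mathcomp Require Import reals zify ring lra.
Import Order.TTheory GRing.Theory Num.Theory.
Local Open Scope ring_scope.
Set Implicit Arguments. Unset Strict Implicit. Unset Printing Implicit Defensive.

Definition e (R : ringType) (a : R) (r c : nat) : R :=
  if r == c then 1 else if r == c.+1 then -a else if r == c.+2 then a
  else if r == c.+3 then -1 else 0.

Lemma Bmat_e (R : ringType) n (a : R) (r : 'I_n.+3) (c : 'I_n) :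
  Bmat n a r c = e a r c.
Proof.
rewrite /Bmat mxE /e /Eentry.
case: r c => [r rn] [c cn] /=.
do ![case: ifP => /eqP ? /=]; try done; exfalso; lia.
Qed.

Lemma inner (R : ringType) n (a : R) (f : nat -> R) c : (c < n)%N ->
  \sum_(r < n.+3) e a r c * f r = f c - a * f c.+1 + a * f c.+2 - f c.+3.
Proof.
move=> cn.
rewrite -(big_mkord xpredT (fun r => e a r c * f r)).
rewrite (big_cat_nat (n := c)) //=; last by lia.
rewrite big1_seq ?add0r; last first.
  move=> r; rewrite mem_index_iota => /andP[? ?].
  rewrite /e; do ![case: ifP => /eqP ? /=]; rewrite ?mul0r //; exfalso; lia.
rewrite big_ltn; last by lia.
rewrite big_ltn; last by lia.
rewrite big_ltn; last by lia.
rewrite big_ltn; last by lia.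
rewrite big1_seq ?addr0; last first.
  move=> r; rewrite mem_index_iota => /andP[? ?].
  rewrite /e; do ![case: ifP => /eqP ? /=]; rewrite ?mul0r //; exfalso; lia.
rewrite /e !eqxx.
have -> : (c.+1 == c) = false by apply/negbTE; lia.
have -> : (c.+2 == c) = false by apply/negbTE; lia.
have -> : (c.+2 == c.+1) = false by apply/negbTE; lia.
have -> : (c.+3 == c) = false by apply/negbTE; lia.
have -> : (c.+3 == c.+1) = false by apply/negbTE; lia.
have -> : (c.+3 == c.+2) = false by apply/negbTE; lia.
rewrite !mul1r !mulN1r !mulNr !addrA; by [].
Qed.

Lemma sys_quad (R : realType) (x y z I J K : R) :
  I != J -> I != K -> J != K ->
  x + y + z = 0 -> x * I + y * J + z * K = 0 ->
  x * I ^+ 2 + y * J ^+ 2 + z * K ^+ 2 = 0 ->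
  [/\ x = 0, y = 0 & z = 0].
Proof.
move=> IJ IK JK e1 e2 e3.
have hx : x * ((I - J) * (I - K)) = 0.
  rewrite -[RHS](_ : (x * I ^+ 2 + y * J ^+ 2 + z * K ^+ 2) - (J + K) * (x * I + y * J + z * K) + J * K * (x + y + z) = 0); last by rewrite e1 e2 e3; ring.
  ring.
have hy : y * ((J - I) * (J - K)) = 0.
  rewrite -[RHS](_ : (x * I ^+ 2 + y * J ^+ 2 + z * K ^+ 2) - (I + K) * (x * I + y * J + z * K) + I * K * (x + y + z) = 0); last by rewrite e1 e2 e3; ring.
  ring.
have hz : z * ((K - I) * (K - J)) = 0.
  rewrite -[RHS](_ : (x * I ^+ 2 + y * J ^+ 2 + z * K ^+ 2) - (I + J) * (x * I + y * J + z * K) + I * J * (x + y + z) = 0); last by rewrite e1 e2 e3; ring.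
  ring.
split.
- by move/eqP: hx; rewrite !mulf_eq0 !subr_eq0 (negbTE IJ) (negbTE IK) !orbF => /eqP.
- by move/eqP: hy; rewrite !mulf_eq0 !subr_eq0 (eq_sym J I) (negbTE IJ) (negbTE JK) !orbF => /eqP.
- by move/eqP: hz; rewrite !mulf_eq0 !subr_eq0 (eq_sym K I) (eq_sym K J) (negbTE IK) (negbTE JK) !orbF => /eqP.
Qed.

Lemma sys_exp (R : realType) (x y z w : R) (i j k : nat) :
  1 < w -> (i < j)%N -> (j < k)%N ->
  x + y + z = 0 -> x * w ^+ i + y * w ^+ j + z * w ^+ k = 0 ->
  x * w^-1 ^+ i + y * w^-1 ^+ j + z * w^-1 ^+ k = 0 ->
  [/\ x = 0, y = 0 & z = 0].
Proof.
move=> w1 ij jk e1 e2 e3.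
have w0 : w != 0 by apply/eqP => h; move: w1; rewrite h; lra.
have Zn0 : w ^+ i != 0 by rewrite expf_neq0.
set A := w ^+ (j - i); set B := w ^+ (k - i).
have A1 : 1 < A by rewrite /A exprn_egt1 //; lia.
have AB : A < B.
  rewrite /B (_ : (k - i = (j - i) + (k - j))%N); last by lia.
  rewrite exprD -/A -[X in X < _]mulr1 ltr_pM2l; last by lra.
  by rewrite exprn_egt1 //; lia.
have ej : w ^+ j = w ^+ i * A by rewrite /A -exprD; congr (_ ^+ _); lia.
have ek : w ^+ k = w ^+ i * B by rewrite /B -exprD; congr (_ ^+ _); lia.
have E1 : x + y * A + z * B = 0.
  have : w ^+ i * (x + y * A + z * B) = 0 by rewrite -e2 ej ek; ring.
  by move/eqP; rewrite mulf_eq0 (negbTE Zn0) => /eqP.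
have E2 : x + y / A + z / B = 0.
  have ej' : w^-1 ^+ j = w^-1 ^+ i / A by rewrite !exprVn ej invfM.
  have ek' : w^-1 ^+ k = w^-1 ^+ i / B by rewrite !exprVn ek invfM.
  have Zn0' : w^-1 ^+ i != 0 by rewrite expf_neq0 // invr_eq0.
  have : w^-1 ^+ i * (x + y / A + z / B) = 0 by rewrite -e3 ej' ek'; ring.
  by move/eqP; rewrite mulf_eq0 (negbTE Zn0') => /eqP.
have A0 : A != 0 by apply/eqP => h; move: A1; rewrite h; lra.
have B0 : B != 0 by apply/eqP => h; move: A1 AB; rewrite h; lra.
have hx : x = - y - z by apply/eqP; rewrite -subr_eq0 -e1; apply/eqP; ring.
have F1 : y * (A - 1) + z * (B - 1) = 0.
  by rewrite -E1 hx; ring.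
have F2 : y * (B * (1 - A)) + z * (A * (1 - B)) = 0.
  rewrite (_ : _ + _ = A * B * (x + y / A + z / B) - A * B * (x + y + z)); last first.
    by field; rewrite A0 B0.
  by rewrite E2 e1; ring.
have hy : y * ((A - 1) * (1 - B) * (A - B)) = 0.
  rewrite (_ : _ * _ = A * (1 - B) * (y * (A - 1) + z * (B - 1)) + (1 - B) * (y * (B * (1 - A)) + z * (A * (1 - B)))); last by ring.
  by rewrite F1 F2; ring.
have y0 : y = 0.
  move/eqP: hy; rewrite !mulf_eq0 => /orP[/eqP //|/orP[/orP[|]|]] /eqP h; exfalso; lra.
have z0 : z = 0.
  move: F1; rewrite y0 mul0r add0r => /eqP; rewrite mulf_eq0 => /orP[/eqP //|/eqP h]; exfalso; lra.
by split => //; move: e1; rewrite y0 z0 !addr0.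
Qed.
Lemma del3_surj (n i j k r : nat) : (i < j)%N -> (j < k)%N -> (k < n.+3)%N ->
  (r < n.+3)%N -> r != i -> r != j -> r != k ->
  exists2 t, (t < n)%N & bump k (bump j (bump i t)) = r.
Proof.
move=> ij jk kn rn ri rj rk.
exists (unbump i (unbump j (unbump k r))); rewrite /bump /unbump; lia.
Qed.

Lemma del3_lt (n i j k t : nat) : (i < j)%N -> (j < k)%N -> (k < n.+3)%N ->
  (t < n)%N -> (bump k (bump j (bump i t)) < n.+3)%N.
Proof. rewrite /bump; lia. Qed.

Definition w (R : ringType) n (a : R) (v : 'rV[R]_n) (r : nat) : R :=
  \sum_(c < n) v 0 c * e a r c.

Lemma key (R : ringType) n (a : R) (v : 'rV[R]_n) (f : nat -> R) :
  (forall c, f c - a * f c.+1 + a * f c.+2 - f c.+3 = 0) ->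
  \sum_(r < n.+3) w a v r * f r = 0.
Proof.
move=> hf.
under eq_bigr do rewrite /w mulr_suml.
rewrite exchange_big /=.
apply: big1 => c _.
rewrite (eq_bigr (fun r : 'I_n.+3 => v 0 c * (e a r c * f r))); last by move=> r _; rewrite mulrA.
by rewrite -mulr_sumr inner // hf mulr0.
Qed.

Lemma w0_v0 (R : ringType) n (a : R) (v : 'rV[R]_n) :
  (forall r, (r < n.+3)%N -> w a v r = 0) -> v = 0.
Proof.
move=> hw.
suff H : forall m (c : 'I_n), (c < m)%N -> v 0 c = 0.
  by apply/rowP => c; rewrite mxE (H c.+1).
elim=> [|m IH] c //.
rewrite ltnS leq_eqVlt => /orP[/eqP cm|]; last exact: IH.
have cn3 : (c < n.+3)%N by have := ltn_ord c; lia.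
have := hw c cn3.
rewrite /w (bigD1 c) //= big1 ?addr0.
  by rewrite /e eqxx mulr1.
move=> c' c'c.
case: (ltnP c' c) => h.
  by rewrite IH ?mul0r // -cm.
rewrite /e; do ![case: ifP => /eqP ? /=]; rewrite ?mulr0 //; exfalso; move: c'c; rewrite -val_eqE /=; lia.
Qed.

Lemma sum3 (R : ringType) N (g : nat -> R) (i j k : 'I_N) :
  (i < j)%N -> (j < k)%N ->
  (forall r, (r < N)%N -> r != i -> r != j -> r != k -> g r = 0) ->
  \sum_(r < N) g r = g i + g j + g k.
Proof.
move=> ij jk hg.
rewrite (bigD1 i) //= (bigD1 j) /=; last by rewrite -val_eqE /=; lia.
rewrite (bigD1 k) /=; last by rewrite -!val_eqE /=; apply/andP; split; lia.
rewrite big1 ?addr0 ?addrA // => r /andP[/andP[ri rj] rk].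
by apply: hg; rewrite // -?val_eqE.
Qed.

Unset Implicit Arguments.

Theorem proposition5p1 (R : realType) (n : nat) (a : R) :
  (a = 3 \/ 5 < a) ->
  forall i j k : 'I_n.+3, (i < j)%N -> (j < k)%N ->
  \det (Bdel n a i j k) != 0.
Proof.
move=> ha i j k ij jk.
apply/negP; rewrite -det_tr => /det0P [v vn0 vA].
have kn : (k < n.+3)%N := ltn_ord k.
have hw1 : forall t : 'I_n, w a v (bump k (bump j (bump i t))) = 0.
  move=> t; have := congr1 (fun M : 'M[R]_(1, n) => M 0 t) vA; rewrite !mxE => <-.
  apply: eq_bigr => c _; rewrite !mxE.
  rewrite [X in _ = _ * X](_ : _ = Bmat n a (del3 i j k t) c); last by rewrite mxE.
  rewrite Bmat_e /del3 inordK //.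
  exact: del3_lt.
have hw2 : forall r, (r < n.+3)%N -> r != i -> r != j -> r != k -> w a v r = 0.
  move=> r rn ri rj rk.
  have [t tn E] := del3_surj ij jk kn rn ri rj rk.
  rewrite -E.
  exact: (hw1 (Ordinal tn)).
suff [h1 h2 h3] : [/\ w a v i = 0, w a v j = 0 & w a v k = 0].
  move/eqP: vn0; apply; apply: (@w0_v0 _ _ a) => r rn.
  case: (eqVneq r i) => [E|ri]; first by rewrite E.
  case: (eqVneq r j) => [E|rj]; first by rewrite E.
  case: (eqVneq r k) => [E|rk]; first by rewrite E.
  exact: hw2.
have S : forall f : nat -> R, (forall c, f c - a * f c.+1 + a * f c.+2 - f c.+3 = 0) ->
    w a v i * f i + w a v j * f j + w a v k * f k = 0.
  move=> f hf; rewrite -(sum3 (g := fun r => w a v r * f r)) //; first exact: key.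
  by move=> r rn ri rj rk; rewrite hw2 ?mul0r.
have S1 := S (fun _ => 1) ltac:(move=> c; ring).
rewrite !mulr1 in S1.
case: ha => [a3|a5].
  have S2 := S (fun r => r%:R) ltac:(move=> c; rewrite a3 !mulrS; ring).
  have S3 := S (fun r => r%:R ^+ 2) ltac:(move=> c; rewrite a3 !mulrS; ring).
  apply: sys_quad S1 S2 S3; rewrite eqr_nat; apply/eqP; lia.
set D := (a - 1) ^+ 2 - 4.
have D0 : 0 <= D by rewrite /D; nra.
set s := Num.sqrt D.
have s0 : 0 <= s by apply: sqrtr_ge0.
have ss : s ^+ 2 = D by apply: sqr_sqrtr.
set z := (a - 1 + s) / 2.
have z1 : 1 < z by rewrite /z ltr_pdivlMr //; lra.
have zq : z ^+ 2 - (a - 1) * z + 1 = 0.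
  by rewrite /z (_ : _ ^+ 2 = ((a - 1) ^+ 2 + 2 * (a - 1) * s + s ^+ 2) / 4); [rewrite ss /D; field | field].
have z0 : z != 0 by apply/eqP => h; move: z1; rewrite h; lra.
have yq : z^-1 ^+ 2 - (a - 1) * z^-1 + 1 = 0.
  have : z^-1 ^+ 2 * (z ^+ 2 - (a - 1) * z + 1) = 0 by rewrite zq mulr0.
  by move=> <-; field.
have hf : forall x : R, x ^+ 2 - (a - 1) * x + 1 = 0 ->
    forall c, x ^+ c - a * x ^+ c.+1 + a * x ^+ c.+2 - x ^+ c.+3 = 0.
  move=> x hx c.
  rewrite (_ : _ - _ = x ^+ c * (1 - x) * (x ^+ 2 - (a - 1) * x + 1)); last first.
    by rewrite !exprS; ring.
  by rewrite hx mulr0.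
have S2 := S (fun r => z ^+ r) (hf z zq).
have S3 := S (fun r => z^-1 ^+ r) (hf _ yq).
exact: sys_exp z1 ij jk S1 S2 S3.
Qed.
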